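(* Consider the topological map $\bar G$ of a narrow-passage warehouse with shelves $s\in\{1,\dots,S\}$ arranged in a rectangular array. For each shelf $s$ choose one of its two 0-instance orientations $I_s$ (clockwise or counterclockwise directed cycle), and choose an arbitrary linear order $s_1,s_2,\dots,s_S$ of the shelves. Build a directed graph by processing the shelves in this order: start with the vertices and directed edges of $I_{s_1}$, and when processing $I_{s_k}$ add its vertices and add each of its directed edges whose underlying undirected edge has not already been oriented by an earlier processed cycle (edges already oriented keep their earlier orientation). Then in the resulting directed graph, for any two vertices $v_s,v_t\in\bar V$ there exists a directed path from $v_s$ to $v_t$ (i.e. the graph is strongly connected).
   Context: Warehouse: a grid with horizontal passage rows $\mathcal H=\{i_1<i_2<\dots\}$ and vertical passage columns $\mathcal V=\{j_1<j_2<\dots\}$ (each of width one cell), with rectangular shelf blocks filling the regions between consecutive passage rows and consecutive passage columns; there are $S=(|\mathcal H|-1)(|\mathcal V|-1)$ shelves. Topological map $\bar G=(\bar V,\bar E)$: its vertices are the crossing vertices (cells $(i,j)\in\mathcal H\times\mathcal V$) and one passage vertex for each passage segment between two consecutive crossings along a passage row or column; each passage vertex is adjacent exactly to the two crossing vertices at the ends of its segment, and there are no other edges. Each shelf $s$ is surrounded by four crossing vertices $v_i,v_j,v_m,v_n$ (its corners, in cyclic order) and four passage vertices $v'_i,v'_j,v'_m,v'_n$ (its sides, $v'_i$ between $v_i$ and $v_j$, etc.). The clockwise 0-instance of $s$ is the directed cycle $v_i\to v'_i\to v_j\to v'_j\to v_m\to v'_m\to v_n\to v'_n\to v_i$, and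 the counterclockwise 0-instance is the reverse cycle $v_i\to v'_n\to v_n\to v'_m\to v_m\to v'_j\to v_j\to v'_i\to v_i$. *)

(* Defs.v *)
From HB Require Import structures.
From mathcomp Require Import all_boot.
Set Implicit Arguments. Unset Strict Implicit. Unset Printing Implicit Defensive.

(* Vertices of the topological map of a warehouse with p passage rows and
   q passage columns (indexed 0..p-1 and 0..q-1 in increasing order).
   Cross a b  : crossing of passage row a and passage column b;
   HPass a b  : passage vertex of the segment of passage row a between
                columns b and b+1;
   VPass a b  : passage vertex of the segment of passage column b between
                rows a and a+1. *)
Inductive vertex := Cross of nat & nat | HPass of nat & nat | VPass of nat & nat.

Definition vertex_code (v : vertex) : nat * nat * nat :=
  match v with
  | Cross a b => (0, a, b) | HPass a b => (1, a, b) | VPass a b => (2, a, b)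
  end.
Definition vertex_decode (c : nat * nat * nat) : vertex :=
  match c with
  | (0, a, b) => Cross a b | (1, a, b) => HPass a b | (_, a, b) => VPass a b
  end.
Lemma vertex_codeK : cancel vertex_code vertex_decode.
Proof. by case. Qed.
HB.instance Definition _ := Equality.copy vertex (can_type vertex_codeK).

Definition is_vertex (p q : nat) (v : vertex) : bool :=
  match v with
  | Cross a b => (a < p) && (b < q)
  | HPass a b => (a < p) && (b.+1 < q)
  | VPass a b => (a.+1 < p) && (b < q)
  end.

Definition is_edge (p q : nat) (u v : vertex) : bool :=
  let adj x y := match x, y with
    | HPass a b, Cross a' b' => (a' == a) && ((b' == b) || (b' == b.+1))
    | VPass a b, Cross a' b' => (b' == b) && ((a' == a) || (a' == a.+1))
    | _, _ => false end in
  [&& is_vertex p q u, is_vertex p q v & adj u v || adj v u].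

(* Shelves: the block between passage rows a, a+1 and columns b, b+1. *)
Definition is_shelf (p q : nat) (s : nat * nat) : bool :=
  (s.1.+1 < p) && (s.2.+1 < q).

(* Closed vertex sequence of the clockwise 0-instance of shelf s
   (corners v_i=(a,b), v_j=(a,b+1), v_m=(a+1,b+1), v_n=(a+1,b)). *)
Definition cw_cycle (s : nat * nat) : seq vertex :=
  let: (a, b) := s in
  [:: Cross a b; HPass a b; Cross a b.+1; VPass a b.+1;
      Cross a.+1 b.+1; HPass a.+1 b; Cross a.+1 b; VPass a b].

Definition cycle_edges (c : seq vertex) : seq (vertex * vertex) :=
  match c with
  | [::] => [::]
  | x :: _ => zip c (rcons (behead c) x)
  end.

Definition instance (cw : bool) (s : nat * nat) : seq (vertex * vertex) :=
  let E := cycle_edges (cw_cycle s) in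
  if cw then E else [seq (e.2, e.1) | e <- rev E].

Definition add_edge (E : seq (vertex * vertex)) (e : vertex * vertex) :=
  if ((e.1, e.2) \in E) || ((e.2, e.1) \in E) then E else rcons E e.

Definition build (o : nat * nat -> bool) (ord : seq (nat * nat))
  : seq (vertex * vertex) :=
  foldl (fun E s => foldl add_edge E (instance (o s) s)) [::] ord.

Definition build_vertices (o : nat * nat -> bool) (ord : seq (nat * nat))
  : seq vertex := flatten [seq cw_cycle s | s <- ord].

Definition reachable (E : seq (vertex * vertex)) (u v : vertex) : Prop :=
  exists2 w : seq vertex, path (fun x y => (x, y) \in E) u w & last u w = v.

(* Main.v *)
Require Import Defs.
From HB Require Import structures.
From mathcomp Require Import all_boot zify.
Set Implicit Arguments. Unset Strict Implicit.

Lemma veqCC a b c d : (Cross a b == Cross c d) = (a == c) && (b == d). Proof. by []. Qed.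
Lemma veqHH a b c d : (HPass a b == HPass c d) = (a == c) && (b == d). Proof. by []. Qed.
Lemma veqVV a b c d : (VPass a b == VPass c d) = (a == c) && (b == d). Proof. by []. Qed.
Lemma veqCH a b c d : (Cross a b == HPass c d) = false. Proof. by []. Qed.
Lemma veqCV a b c d : (Cross a b == VPass c d) = false. Proof. by []. Qed.
Lemma veqHC a b c d : (HPass a b == Cross c d) = false. Proof. by []. Qed.
Lemma veqVC a b c d : (VPass a b == Cross c d) = false. Proof. by []. Qed.
Lemma veqHV a b c d : (HPass a b == VPass c d) = false. Proof. by []. Qed.
Lemma veqVH a b c d : (VPass a b == HPass c d) = false. Proof. by []. Qed.
Definition veqE := (veqCC, veqHH, veqVV, veqCH, veqCV, veqHC, veqVC, veqHV, veqVH).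

Lemma cw_norev a b x y : (x, y) \in cycle_edges (cw_cycle (a,b)) ->
   (y, x) \in cycle_edges (cw_cycle (a,b)) -> False.
Proof.
rewrite /= !inE.
do 7 (case/orP; first (move/eqP=> [-> ->]; rewrite !xpair_eqE !veqE /=; lia)).
move/eqP=> [-> ->]; rewrite !xpair_eqE !veqE /=; lia.
Qed.
Definition CE (s : nat * nat) := cycle_edges (cw_cycle s).

Lemma mem_instance c s x y :
  ((x, y) \in instance c s) = if c then (x, y) \in CE s else (y, x) \in CE s.
Proof.
rewrite /instance /CE; case: c => //.
apply/mapP/idP => [[[u v]] + [-> ->] /=|h]; first by rewrite mem_rev.
by exists (y, x); rewrite ?mem_rev.
Qed.

Lemma inst_norev c s x y : (x, y) \in instance c s -> (y, x) \in instance c s -> False.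
Proof.
case: s => a b; rewrite !mem_instance /CE; case: c => h1 h2.
  exact: (cw_norev h1 h2).
exact: (cw_norev h2 h1).
Qed.

Lemma CE_mem s x y : (x, y) \in CE s -> (x \in cw_cycle s) && (y \in cw_cycle s).
Proof.
case: s => a b; rewrite /CE /= !inE.
by do 7 (case/orP; first (move/eqP=> [-> ->]; rewrite !eqxx ?orbT //)); move/eqP=> [-> ->]; rewrite !eqxx ?orbT.
Qed.

Lemma cyc_all (R : vertex -> vertex -> Prop) s :
  (forall x, R x x) -> (forall x y z, R x y -> R y z -> R x z) ->
  (forall x y, (x, y) \in CE s -> R x y) ->
  forall u w, u \in cw_cycle s -> w \in cw_cycle s -> R u w.
Proof.
move=> Rr Rt; case: s => a b /= he.
have e0 : R (Cross a b) (HPass a b) by apply: he; rewrite /CE /= !inE eqxx ?orbT.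
have e1 : R (HPass a b) (Cross a b.+1) by apply: he; rewrite /CE /= !inE eqxx ?orbT.
have e2 : R (Cross a b.+1) (VPass a b.+1) by apply: he; rewrite /CE /= !inE eqxx ?orbT.
have e3 : R (VPass a b.+1) (Cross a.+1 b.+1) by apply: he; rewrite /CE /= !inE eqxx ?orbT.
have e4 : R (Cross a.+1 b.+1) (HPass a.+1 b) by apply: he; rewrite /CE /= !inE eqxx ?orbT.
have e5 : R (HPass a.+1 b) (Cross a.+1 b) by apply: he; rewrite /CE /= !inE eqxx ?orbT.
have e6 : R (Cross a.+1 b) (VPass a b) by apply: he; rewrite /CE /= !inE eqxx ?orbT.
have e7 : R (VPass a b) (Cross a b) by apply: he; rewrite /CE /= !inE eqxx ?orbT.
have r6 := Rt _ _ _ e6 e7. have r5 := Rt _ _ _ e5 r6. have r4 := Rt _ _ _ e4 r5.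
have r3 := Rt _ _ _ e3 r4. have r2 := Rt _ _ _ e2 r3. have r1 := Rt _ _ _ e1 r2.
have f2 := Rt _ _ _ e0 e1. have f3 := Rt _ _ _ f2 e2. have f4 := Rt _ _ _ f3 e3.
have f5 := Rt _ _ _ f4 e4. have f6 := Rt _ _ _ f5 e5. have f7 := Rt _ _ _ f6 e6.
have to0 : forall u, u \in cw_cycle (a, b) -> R u (Cross a b).
  move=> u; rewrite /= !inE.
  by do 7 (case/orP; first (move/eqP->; by [])); move/eqP->.
have from0 : forall u, u \in cw_cycle (a, b) -> R (Cross a b) u.
  move=> u; rewrite /= !inE.
  by do 7 (case/orP; first (move/eqP->; by [])); move/eqP->.
move=> u w hu hw; exact: Rt _ _ _ (to0 _ hu) (from0 _ hw).
Qed.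

Lemma reach_refl E u : reachable E u u.
Proof. by exists [::]. Qed.
Lemma reach_edge E u v : (u, v) \in E -> reachable E u v.
Proof. by move=> h; exists [:: v] => //=; rewrite h. Qed.
Lemma reach_trans E u v w : reachable E u v -> reachable E v w -> reachable E u w.
Proof.
move=> [s1 p1 l1] [s2 p2 l2]; exists (s1 ++ s2).
  by rewrite cat_path p1 l1 p2.
by rewrite last_cat l1.
Qed.
Lemma reach_mono E E' u v : {subset E <= E'} -> reachable E u v -> reachable E' u v.
Proof.
move=> sub [s ps ls]; exists s => //.
by apply: sub_path ps => x y /sub.
Qed.

Lemma F1 l E : {subset E <= foldl add_edge E l}.
Proof.
elim: l E => [|e l IH] E x hx //=; apply: IH.
by rewrite /add_edge; case: ifP => // _; rewrite mem_rcons inE hx orbT.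
Qed.

Lemma F2 l E e : e \in l ->
  ((e.1, e.2) \in foldl add_edge E l) || ((e.2, e.1) \in foldl add_edge E l).
Proof.
elim: l E => //= e' l IH E; rewrite inE; case/orP => [/eqP <-|]; last exact: IH.
rewrite /add_edge; case: ifP => [/orP [h|h]|_].
- by rewrite (F1 l h).
- by rewrite (F1 l h) orbT.
- by rewrite (F1 l (x := (e.1, e.2))) // mem_rcons inE -surjective_pairing eqxx.
Qed.

Lemma F3 l E x : x \in foldl add_edge E l -> (x \in E) || (x \in l).
Proof.
elim: l E => [|e l IH] E /=; first by move=> ->.
move/IH; rewrite inE /add_edge; case: ifP => _; first by case/orP=> ->; rewrite ?orbT.
by rewrite mem_rcons inE; case/orP => [/orP[->|->]|->]; rewrite ?orbT.
Qed.

Definition Inv E := forall x y, (x, y) \in E -> reachable E y x.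

Definition step o E (s : nat * nat) := foldl add_edge E (instance (o s) s).

Lemma step_inv o E s : Inv E -> Inv (step o E s).
Proof.
move=> hI; set E' := step o E s; set I := instance (o s) s.
have sub : {subset E <= E'} by exact: F1.
have fwd : forall x y, (x, y) \in I -> reachable E' x y.
  move=> x y hxy; case hE : ((x, y) \in E'); first exact: reach_edge.
  have := F2 E hxy; rewrite /= hE /= => hyx.
  case/orP: (F3 hyx) => [h|h]; first exact: (reach_mono sub (hI _ _ h)).
  by case: (inst_norev hxy h).
move=> x y hxy; case/orP: (F3 hxy) => [h|h].
  exact: (reach_mono sub (hI _ _ h)).
move: h fwd; rewrite /I mem_instance; case: (o s) => h fwd.
- have /andP[hx hy] := CE_mem h.
  apply: (cyc_all (R := reachable E') (@reach_refl E') (@reach_trans E') _ hy hx).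
  by move=> u v huv; apply: fwd; rewrite mem_instance.
- have /andP[hy hx] := CE_mem h.
  apply: (cyc_all (R := fun u v => reachable E' v u) (@reach_refl E') _ _ hx hy).
    by move=> u v w h1 h2; exact: reach_trans h2 h1.
  by move=> u v huv; apply: fwd; rewrite mem_instance.
Qed.

Lemma step_sub o E s : {subset E <= step o E s}.
Proof. exact: F1. Qed.

Lemma fold_sub o ord E : {subset E <= foldl (step o) E ord}.
Proof.
elim: ord E => [|s ord IH] E x hx //=; apply: IH; exact: step_sub.
Qed.

Lemma fold_inv o ord E : Inv E -> Inv (foldl (step o) E ord).
Proof. elim: ord E => [|s ord IH] E hE //=; apply: IH; exact: step_inv. Qed.

Definition linked (E : seq (vertex * vertex)) (x y : vertex) := ((x, y) \in E) || ((y, x) \in E).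

Lemma fold_linked o ord E s x y : s \in ord -> (x, y) \in CE s ->
  linked (foldl (step o) E ord) x y.
Proof.
elim: ord E => [|s' ord IH] E //=; rewrite inE; case/orP => [/eqP <-|]; last exact: IH.
move=> h; have : linked (step o E s) x y.
  have [hin|hin] : (x, y) \in instance (o s) s \/ (y, x) \in instance (o s) s.
    by rewrite !mem_instance; case: (o s); [left|right].
  - exact: (F2 E hin).
  - by rewrite /linked orbC; exact: (F2 E hin).
by rewrite /linked => /orP[] /(fold_sub o ord) ->; rewrite ?orbT.
Qed.

Lemma conn_linked E x y : Inv E -> linked E x y -> reachable E x y /\ reachable E y x.
Proof.
move=> hI /orP[h|h].
  by split; [exact: reach_edge | exact: hI].
by split; [exact: hI | exact: reach_edge].
Qed.

Theorem theorem1 (p q : nat) (o : nat * nat -> bool) (ord : seq (nat * nat)) :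
  2 <= p -> 2 <= q ->
  uniq ord -> (forall s, (s \in ord) = is_shelf p q s) ->
  forall u v, is_vertex p q u -> is_vertex p q v ->
  reachable (build o ord) u v.
Proof.
move=> hp hq _ hord.
have hI : Inv (build o ord) by apply: fold_inv => x y.
set E := build o ord in hI *.
pose C x y := reachable E x y /\ reachable E y x.
have Ct : forall x y z, C x y -> C y z -> C x z.
  by move=> x y z [h1 h2] [h3 h4]; split; apply: reach_trans; eauto.
have Cs : forall x y, C x y -> C y x by move=> x y [].
have Cr : forall x, C x x by move=> x; split; exact: reach_refl.
have Csh : forall a b x y, a.+1 < p -> b.+1 < q -> (x, y) \in CE (a, b) -> C x y.
  move=> a b x y ha hb hxy; apply: conn_linked => //.
  by apply: (fold_linked o _ _ hxy); rewrite hord /is_shelf /= ha hb.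
have hstep : forall a b, a < p -> b.+1 < q ->
    C (Cross a b) (HPass a b) /\ C (HPass a b) (Cross a b.+1).
  move=> a b ha hb; case: (ltnP a.+1 p) => ha'.
    by split; apply: (Csh a b) => //; rewrite /CE /= !inE eqxx ?orbT.
  case: a ha ha' => [|a] ha ha'; first lia.
  have ha2 : a.+1 < p by apply: leq_trans ha.
  split; apply: Cs; apply: (Csh a b) => //; rewrite /CE /= !inE eqxx ?orbT //.
have vstep : forall a b, a.+1 < p -> b < q ->
    C (Cross a b) (VPass a b) /\ C (VPass a b) (Cross a.+1 b).
  move=> a b ha hb; case: (ltnP b.+1 q) => hb'.
    by split; apply: Cs; apply: (Csh a b) => //; rewrite /CE /= !inE eqxx ?orbT.
  case: b hb hb' => [|b] hb hb'; first lia.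
  have hb2 : b.+1 < q by apply: leq_trans hb.
  split; apply: (Csh a b) => //; rewrite /CE /= !inE eqxx ?orbT //.
have cross : forall a b, a < p -> b < q -> C (Cross 0 0) (Cross a b).
  elim=> [|a IH] b ha hb.
    elim: b hb => [|b IHb] hb; first exact: Cr.
    have [h1 h2] := hstep 0 b ha hb.
    exact: Ct _ _ _ (IHb (ltnW hb)) (Ct _ _ _ h1 h2).
  have [h1 h2] := vstep a b ha hb.
  exact: Ct _ _ _ (IH b (ltnW ha) hb) (Ct _ _ _ h1 h2).
have vert : forall w, is_vertex p q w -> C (Cross 0 0) w.
  case=> a b /= /andP[ha hb].
  - exact: cross.
  - have [h1 _] := hstep a b ha hb.
    exact: Ct _ _ _ (cross a b ha (ltnW hb)) h1.
  - have [h1 _] := vstep a b ha hb.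
    exact: Ct _ _ _ (cross a b (ltnW ha) hb) h1.
move=> u v hu hv.
exact: (Ct _ _ _ (Cs _ _ (vert u hu)) (vert v hv)).1.
Qed.
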